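(* Let $m\ge 1$ and $d_k\ge 1$ be integers, let $u\in\mathbb{R}^m$ with $\|u\|=1$, and let $g_1,\ldots,g_{d_k}\in\mathbb{R}^m$ be vectors such that no $g_i$ is colinear with $u$. Consider the optimization problem $$\min_{V_1,\ldots,V_{d_k}\in\mathbb{R}^m}\ \sum_{i=1}^{d_k} V_i^T g_i \quad\text{subject to}\quad u^T\Big(\sum_{j=1}^{d_k} V_j\Big)=2-d_k,\qquad \|V_i\|=1\ \ (i=1,\ldots,d_k).$$ Then at an optimum $(V_1^*,\ldots,V_{d_k}^* )$ of this problem, every vector $V_i^*$ lies in the (two-dimensional) linear subspace of $\mathbb{R}^m$ spanned by $g_i$ and $u$.
   Context: This problem is the block subproblem arising in a low-rank (Burer–Monteiro) SDP relaxation of a pairwise discrete graphical model: the $V_i$ are the rows of the low-rank factor associated with the $d_k$ values of a discrete variable $x_k$, $u$ is the fixed last row $V_{d+1}$ of the factor, and the $g_i$ are fixed vectors determined by the other rows. $\|\cdot\|$ is the Euclidean norm. *)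

(* Defs.v *)
From HB Require Import structures.
From mathcomp Require Import all_boot all_order all_algebra.
From mathcomp Require Import reals.
Set Implicit Arguments. Unset Strict Implicit. Unset Printing Implicit Defensive.
Import Order.TTheory GRing.Theory Num.Theory.
Local Open Scope ring_scope.

Definition dotv (R : realType) (m : nat) (x y : 'rV[R]_m) : R :=
  \sum_(k < m) x 0 k * y 0 k.

Definition normv (R : realType) (m : nat) (x : 'rV[R]_m) : R :=
  Num.sqrt (dotv x x).

Definition colinear (R : realType) (m : nat) (x y : 'rV[R]_m) : Prop :=
  exists a b : R, (a != 0 \/ b != 0) /\ a *: x + b *: y = 0.

Definition feasible (R : realType) (m dk : nat) (u : 'rV[R]_m)
  (V : 'I_dk -> 'rV[R]_m) : Prop :=
  dotv u (\sum_(j < dk) V j) = 2 - dk%:R /\ forall i, normv (V i) = 1.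

Definition objective (R : realType) (m dk : nat) (g V : 'I_dk -> 'rV[R]_m) : R :=
  \sum_(i < dk) dotv (V i) (g i).

Definition is_optimum (R : realType) (m dk : nat) (u : 'rV[R]_m)
  (g V : 'I_dk -> 'rV[R]_m) : Prop :=
  feasible u V /\ forall W, feasible u W -> objective g V <= objective g W.

(* Main.v *)
Require Import Defs.
From HB Require Import structures.
From mathcomp Require Import all_boot all_order all_algebra.
From mathcomp Require Import reals.
From mathcomp Require Import ring lra.
Import Order.TTheory GRing.Theory Num.Theory.
Local Open Scope ring_scope.

Section Aux.
Variables (R : realType) (m : nat).
Implicit Types (x y z : 'rV[R]_m).

Lemma dotvC x y : dotv x y = dotv y x.
Proof. by apply: eq_bigr => k _; rewrite mulrC. Qed.

Lemma dotvDl x y z : dotv (x + y) z = dotv x z + dotv y z.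
Proof. by rewrite /dotv -big_split; apply: eq_bigr => k _; rewrite mxE mulrDl. Qed.

Lemma dotvZl (a : R) x y : dotv (a *: x) y = a * dotv x y.
Proof. by rewrite /dotv mulr_sumr; apply: eq_bigr => k _; rewrite mxE mulrA. Qed.

Lemma dotvNl x y : dotv (- x) y = - dotv x y.
Proof. by rewrite -scaleN1r dotvZl mulN1r. Qed.

Lemma dotvBl x y z : dotv (x - y) z = dotv x z - dotv y z.
Proof. by rewrite dotvDl dotvNl. Qed.

Lemma dotvDr x y z : dotv z (x + y) = dotv z x + dotv z y.
Proof. by rewrite !(dotvC z) dotvDl. Qed.

Lemma dotvZr (a : R) x y : dotv y (a *: x) = a * dotv y x.
Proof. by rewrite !(dotvC y) dotvZl. Qed.

Lemma dotvBr x y z : dotv z (x - y) = dotv z x - dotv z y.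
Proof. by rewrite !(dotvC z) dotvBl. Qed.

Lemma dotv0r x : dotv x 0 = 0.
Proof. by rewrite /dotv big1 // => k _; rewrite mxE mulr0. Qed.

Lemma dotv_sumr (n : nat) x (F : 'I_n -> 'rV[R]_m) :
  dotv x (\sum_(j < n) F j) = \sum_(j < n) dotv x (F j).
Proof. exact: (big_morph (dotv x) (fun a b => dotvDr a b x) (dotv0r x)). Qed.

Lemma dotv_ge0 x : 0 <= dotv x x.
Proof. by apply: sumr_ge0 => k _; rewrite -expr2 sqr_ge0. Qed.

Lemma dotv_eq0 x : dotv x x = 0 -> x = 0.
Proof.
move=> H; apply/rowP => k; rewrite mxE.
have P0 : forall i : 'I_m, true -> 0 <= x 0 i * x 0 i.
  by move=> i _; rewrite -expr2 sqr_ge0.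
have := psumr_eq0P P0 H isT (i:=k).
by rewrite -expr2 => /eqP; rewrite sqrf_eq0 => /eqP.
Qed.

Lemma normv1 x : normv x = 1 -> dotv x x = 1.
Proof. rewrite /normv => H; by rewrite -(sqr_sqrtr (dotv_ge0 x)) H expr1n. Qed.

Lemma dotvNr x y : dotv y (- x) = - dotv y x.
Proof. by rewrite !(dotvC y) dotvNl. Qed.

Definition dotvE := (@dotvDl, @dotvDr, @dotvNl, @dotvNr, @dotvBl, @dotvBr, @dotvZl, @dotvZr).

Lemma dotv_sub_sc (r h : 'rV[R]_m) (k : R) :
  dotv (r - k *: h) (r - k *: h) = dotv r r - k * dotv r h - k * dotv r h + k * (k * dotv h h).
Proof. rewrite dotvBl !dotvBr !dotvZl !dotvZr (dotvC h r); ring. Qed.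

Lemma key u v g : dotv u u = 1 -> dotv v v = 1 -> ~ colinear g u ->
  ~~ (v <= col_mx g u)%MS ->
  exists w : 'rV[R]_m, dotv u w = dotv u v /\ dotv w w = 1 /\ dotv w g < dotv v g.
Proof.
move=> huu hvv hg hnot.
have [a ha] : exists a, dotv u v = a by eexists.
have [b hb] : exists b, dotv u g = b by eexists.
have hvu : dotv v u = a by rewrite dotvC.
have hgu : dotv g u = b by rewrite dotvC.
have hgv : dotv g v = dotv v g by rewrite dotvC.
set hh := dotv (g - b *: u) (g - b *: u).
have hhE : hh = dotv g g - b ^+ 2.
  by rewrite /hh; rewrite !dotvE ?huu ?hvv ?ha ?hb ?hvu ?hgu ?hgv; ring.
have hh0 : 0 < hh.
  rewrite lt_def dotv_ge0 andbT; apply/eqP => /dotv_eq0 H.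
  apply: hg; exists 1, (- b); split; first by left; exact: oner_neq0.
  by rewrite scale1r scaleNr.
set rh := dotv (v - a *: u) (g - b *: u).
have rhE : rh = dotv v g - a * b by rewrite /rh; rewrite !dotvE ?huu ?hvv ?ha ?hb ?hvu ?hgu ?hgv; ring.
set rr := dotv (v - a *: u) (v - a *: u).
have rrE : rr = 1 - a ^+ 2 by rewrite /rr; rewrite !dotvE ?huu ?hvv ?ha ?hb ?hvu ?hgu ?hgv; ring.
have rr0 : 0 <= rr by exact: dotv_ge0.
set k := rh / hh.
case: (eqVneq ((v - a *: u) - k *: (g - b *: u)) 0) => E.
  exfalso; move/negP: hnot; apply; apply/submxP.
  exists (row_mx (k%:M) ((a - k * b)%:M)).
  rewrite mul_row_col !mul_scalar_mx; apply/rowP => j.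
  move/rowP: E => /(_ j); rewrite !mxE => E.
  apply/eqP; rewrite -subr_eq0; apply/eqP; rewrite -E; ring.
have ee0 : 0 < dotv ((v - a *: u) - k *: (g - b *: u)) ((v - a *: u) - k *: (g - b *: u)).
  by rewrite lt_def dotv_ge0 andbT; apply/eqP => /dotv_eq0; apply/eqP.
have eeE : dotv ((v - a *: u) - k *: (g - b *: u)) ((v - a *: u) - k *: (g - b *: u))
   = rr - rh ^+ 2 / hh.
  rewrite dotv_sub_sc -/rr -/rh -/hh /k; field; exact: lt0r_neq0.
have Hcs : rh ^+ 2 < rr * hh.
  have : 0 < (rr - rh ^+ 2 / hh) * hh by rewrite -eeE mulr_gt0.
  rewrite mulrBl mulfVK ?lt0r_neq0 //; lra.
pose s := Num.sqrt (rr / hh).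
have s0 : 0 <= s by exact: sqrtr_ge0.
have s2 : s ^+ 2 = rr / hh by rewrite sqr_sqrtr // divr_ge0 // ltW.
exists (a *: u - s *: (g - b *: u)); split; last split.
- by rewrite !dotvE ?huu ?hvv ?ha ?hb ?hvu ?hgu ?hgv; ring.
- rewrite !dotvE ?huu ?hvv ?ha ?hb ?hvu ?hgu ?hgv.
  have -> : dotv g g = hh + b ^+ 2 by rewrite hhE; ring.
  have H1 : s * s * hh = 1 - a ^+ 2 by rewrite -expr2 s2 mulfVK ?lt0r_neq0 // rrE.
  apply: (@eq_trans _ _ (a ^+ 2 + s * s * hh)); first ring.
  rewrite H1; ring.
- rewrite !dotvE ?huu ?hvv ?ha ?hb ?hvu ?hgu ?hgv.
  have -> : dotv g g = hh + b ^+ 2 by rewrite hhE; ring.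
  have -> : dotv v g = rh + a * b by rewrite rhE; ring.
  have Hs : (s * hh) ^+ 2 = rr * hh.
    by rewrite exprMn s2 expr2 mulrA mulfVK ?lt0r_neq0.
  suff : - (s * hh) < rh by move=> H; lra.
  have shh : 0 <= s * hh by rewrite mulr_ge0 // ltW.
  rewrite ltNge; apply/negP => H.
  nra.
Qed.

End Aux.

Theorem theorem2 (R : realType) (m dk : nat) (hm : (1 <= m)%N) (hdk : (1 <= dk)%N)
  (u : 'rV[R]_m) (g : 'I_dk -> 'rV[R]_m)
  (hu : normv u = 1) (hg : forall i, ~ colinear (g i) u)
  (V : 'I_dk -> 'rV[R]_m) (hV : is_optimum u g V) :
  forall i, (V i <= col_mx (g i) u)%MS.
Proof.
move=> i; apply/negPn/negP => Hn.
case: hV => [[hsum hnorm] hmin].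
have [w [hw1 [hw2 hw3]]] := @key _ _ _ _ _ (@normv1 _ _ _ hu) (@normv1 _ _ _ (hnorm i)) (hg i) Hn.
pose W := fun j => if j == i then w else V j.
have hW : feasible u W.
  split.
    rewrite dotv_sumr -hsum dotv_sumr; apply: eq_bigr => j _.
    by rewrite /W; case: eqP => // ->.
  move=> j; rewrite /W; case: eqP => // _.
  by rewrite /normv hw2 sqrtr1.
have := hmin W hW.
rewrite /objective (bigD1 i) //= [X in _ <= X](bigD1 i) //= /W eqxx.
have -> : \sum_(j < dk | j != i) dotv (if j == i then w else V j) (g j)
        = \sum_(j < dk | j != i) dotv (V j) (g j).
  by apply: eq_bigr => j /negbTE ->.
by rewrite lerD2r leNgt hw3.
Qed.
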